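(* Let $K$ be an infinite field and $n\ge 4$. Let $f\in K[x_1,\ldots,x_n]$ be of the form $f(x)=\lambda\,l_1(x)^{\alpha_1}\cdots l_k(x)^{\alpha_k}$, where $\lambda$ is a nonzero constant, $l_i(x)=\sum_{j=1}^n l_{ij}x_j$ are linear forms with $l_i$ not proportional to $l_j$ for $i\ne j$, and assume ( * ): the $k$ coefficients $l_{11},\ldots,l_{k1}$ are distinct and nonzero, and $l_{in}=1$ for all $i$. Then the following algorithm outputs a correct factorization of $f$ (equal to the given one up to a permutation of the factors): 1. For $j=2,\ldots,n-1$, let $g_j(x_1,x_j)=f\circ\pi_j$, where $\pi_j$ sends $x_n$ to $1$, leaves $x_1$ and $x_j$ unchanged and sets all other variables to $0$; compute the dense representation of each $g_j$ by interpolation. 2. Using a bivariate factorization algorithm, write each $g_j$ as $g_j(x_1,x_j)=\lambda\prod_{i=1}^k(a_{ij}x_1+b_{ij}x_j+1)^{\beta_{ij}}$. 3. Reorder the factors of the $g_j$ so that the tuples $(a_{1j},\ldots,a_{kj})$ are identical for all $j$, obtaining $g_j(x_1,x_j)=\lambda\prod_{i=1}^k(a_ix_1+c_{ij}x_j+1)^{\gamma_i}$ with exponents $\gamma_i$ independent of $j$. 4. Output $f(x_1,\ldots,x_n)=\lambda\prod_{i=1}^k(a_ix_1+c_{i2}x_2+\cdots+c_{i,n-1}x_{n-1}+x_n)^{\gamma_i}$.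
   Context: The bivariate factorization algorithm in step 2 returns the factorization of $g_j$ into irreducible factors with multiplicities over a field containing the coefficients of the $l_i$ (the statement includes the assertion that these factorizations have the displayed shape and that the reordering in step 3 is possible). *)

(* Defs.v *)
From HB Require Import structures.
From mathcomp Require Import all_boot all_order all_algebra.
From mathcomp Require Import mpoly.
Set Implicit Arguments. Unset Strict Implicit. Unset Printing Implicit Defensive.
Import GRing.Theory.
Local Open Scope ring_scope.

(* Variables x_1,...,x_n are indexed by 'I_n: x_1 = index 0, x_j = index j-1,
   x_n = index n-1. *)

Definition infinite_field (K : fieldType) : Prop :=
  forall s : seq K, exists x : K, x \notin s.

Definition linform (K : fieldType) (n : nat) (c : 'I_n -> K) : {mpoly K[n]} :=
  \sum_(m < n) c m *: 'X_m.

Definition prodlin (K : fieldType) (n k : nat) (lam : K)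
    (l : 'I_k -> 'I_n -> K) (alpha : 'I_k -> nat) : {mpoly K[n]} :=
  lam *: \prod_(i < k) (linform (l i)) ^+ alpha i.

Definition proportional (K : fieldType) (n : nat) (u v : 'I_n -> K) : Prop :=
  exists c : K, (forall m, u m = c * v m) \/ (forall m, v m = c * u m).

Definition mid_index (n : nat) (j : 'I_n) : bool := ((0 < val j) && (val j < n.-1))%N.

(* pi_j : x_1 |-> X_0, x_j |-> X_1, x_n |-> 1, other variables |-> 0, landing in
   the bivariate ring K[X_0, X_1] (X_0 plays x_1 and X_1 plays x_j). *)
Definition pi_tuple (K : fieldType) (n : nat) (j : 'I_n) : n.-tuple {mpoly K[2]} :=
  [tuple (if val m == 0%N then 'X_(0 : 'I_2)
          else if m == j then 'X_(1 : 'I_2)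
          else if val m == n.-1 then 1 else 0) | m < n].

Definition gproj (K : fieldType) (n : nat) (f : {mpoly K[n]}) (j : 'I_n) : {mpoly K[2]} :=
  f \mPo pi_tuple K j.

Definition mirreducible (K : fieldType) (d : nat) (p : {mpoly K[d]}) : Prop :=
  p != 0 /\ p \isn't a GRing.unit /\
  forall q r : {mpoly K[d]}, p = q * r -> q \is a GRing.unit \/ r \is a GRing.unit.

Definition massociated (K : fieldType) (d : nat) (p q : {mpoly K[d]}) : Prop :=
  exists c : K, c != 0 /\ p = c *: q.

Definition irr_factorization (K : fieldType) (d : nat) (g : {mpoly K[d]})
    (mu : K) (s : seq ({mpoly K[d]} * nat)) : Prop :=
  [/\ g = mu *: \prod_(pe <- s) pe.1 ^+ pe.2,
      forall pe, pe \in s -> mirreducible pe.1 /\ (0 < pe.2)%N &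
      forall i1 i2 : nat, (i1 < size s)%N -> (i2 < size s)%N -> i1 <> i2 ->
        ~ massociated (nth (0, 0%N) s i1).1 (nth (0, 0%N) s i2).1].

Definition lin2 (K : fieldType) (a b : K) : {mpoly K[2]} :=
  a *: 'X_(0 : 'I_2) + b *: 'X_(1 : 'I_2) + 1.

(* Coefficient vector of the output linear form of step 4:
   a x_1 + c_2 x_2 + ... + c_{n-1} x_{n-1} + x_n  (c indexed by 'I_n). *)
Definition outlin (K : fieldType) (n : nat) (a : K) (c : 'I_n -> K) : 'I_n -> K :=
  fun m => if val m == 0%N then a else if val m == n.-1 then 1 else c m.

(* Main.v *)
Require Import Defs.
From HB Require Import structures.
From mathcomp Require Import all_boot all_order all_algebra all_fingroup.
From mathcomp Require Import mpoly ring zify.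
Import GRing.Theory.
Local Open Scope ring_scope.

Section Iso.
Variable K : fieldType.
Local Notation MP := {mpoly K[2]}.
Local Notation D := {poly K}.
Local Notation T := {poly {poly K}}.

Definition hX (i : 'I_2) : T := if val i == 0%N then 'X else ('X)%:P.
Definition cc : {rmorphism K -> T} := (polyC \o polyC)%FUN.
Definition Phi (p : MP) : T := mmap cc hX p.
Definition psi1 : {rmorphism D -> MP} :=
  (horner_eval ('X_(1 : 'I_2) : MP) \o map_poly (@mpolyC 2 K))%FUN.
Definition Psi : {rmorphism T -> MP} :=
  (horner_eval ('X_(0 : 'I_2) : MP) \o map_poly psi1)%FUN.

Lemma Psi_cc c : Psi (cc c) = c%:MP.
Proof. by rewrite /= map_polyC /= !horner_evalE map_polyC /= hornerC hornerC. Qed.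

Lemma Psi_hX i : Psi (hX i) = 'X_i.
Proof.
rewrite /hX; case: i => [[|[|i]] Hi] //=.
  have -> : Ordinal Hi = 0 :> 'I_2 by apply: val_inj.
  by rewrite map_polyX !horner_evalE hornerX.
have -> : Ordinal Hi = 1 :> 'I_2 by apply: val_inj.
by rewrite map_polyC !horner_evalE hornerC /= map_polyX horner_evalE hornerX.
Qed.

Lemma Psi_Phi p : Psi (Phi p) = p.
Proof.
rewrite {2}(mpolyE p) /Phi /mmap rmorph_sum.
apply: eq_bigr => m _.
rewrite rmorphM Psi_cc mul_mpolyC; congr (_ *: _).
rewrite [RHS]mpolyXE_id /mmap1 rmorph_prod; apply: eq_bigr => i _.
by rewrite rmorphXn Psi_hX.
Qed.

Lemma Phi_X i : Phi 'X_i = hX i.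
Proof. by rewrite /Phi mmapX mmap1U. Qed.

Lemma Phi_lin2 (a b : K) : a != 0 ->
  Phi (lin2 a b) = (a%:P)%:P * ('X - (- ((b%:P * 'X + 1) * (a^-1)%:P))%:P).
Proof.
move=> a0.
rewrite /lin2 /Phi !raddfD /= !mmapZ /= rmorph1 -!/(Phi _) !Phi_X /hX /=.
rewrite polyCN opprK mulrDr -addrA; congr (_ + _).
rewrite -[in RHS]polyCM mulrCA -[a%:P * _]polyCM mulfV // polyC1 mulr1.
by rewrite polyCD polyCM polyC1.
Qed.

Lemma PhiM (p q : MP) : Phi (p * q) = Phi p * Phi q.
Proof. exact: rmorphM. Qed.
Lemma Phi0 : Phi 0 = 0.
Proof. exact: raddf0. Qed.
Lemma Phi_unit p : p \is a GRing.unit -> Phi p \is a GRing.unit.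
Proof. exact: (rmorph_unit (mmap cc hX)). Qed.

Definition mdvd (p q : MP) := exists r, q = p * r.
Definition mprime (p : MP) := [/\ p != 0, p \isn't a GRing.unit &
  forall x y, mdvd p (x * y) -> mdvd p x \/ mdvd p y].

Lemma size_Phi_lin2 (a b : K) : a != 0 -> size (Phi (lin2 a b)) = 2%N.
Proof.
move=> a0; rewrite Phi_lin2 // size_Cmul ?polyC_eq0 // size_XsubC //.
Qed.

Lemma lin2_neq0 (a b : K) : a != 0 -> lin2 a b != 0.
Proof.
move=> a0; apply/eqP => L0; have := size_Phi_lin2 a b a0.
by rewrite L0 Phi0 size_poly0.
Qed.

Lemma lin2_nunit (a b : K) : a != 0 -> lin2 a b \isn't a GRing.unit.
Proof.
move=> a0; apply/negP => /Phi_unit; rewrite poly_unitE size_Phi_lin2 //.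
Qed.

Lemma lin2_prime (a b : K) : a != 0 -> mprime (lin2 a b).
Proof.
move=> a0; split; [exact: lin2_neq0 | exact: lin2_nunit |].
set x0 : {poly K} := - ((b%:P * 'X + 1) * (a^-1)%:P).
have HL := Phi_lin2 a b a0; rewrite -/x0 in HL.
have Hdiv : forall z : MP, (Phi z).[x0] = 0 -> mdvd (lin2 a b) z.
  move=> z /eqP /factor_theorem [q Hq].
  exists (Psi (q * ((a^-1)%:P)%:P)).
  rewrite -{1}(Psi_Phi z) -(Psi_Phi (lin2 a b)) -rmorphM; congr (Psi _).
  have E : (a%:P)%:P * ((a^-1)%:P)%:P = 1 :> T by rewrite -!polyCM mulfV.
  rewrite HL Hq -[LHS]mulr1 -E; ring.
move=> x y [r Hr].
have := congr1 (fun p => (Phi p).[x0]) Hr => /=.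
rewrite !PhiM HL !hornerM hornerXsubC subrr mulr0 mul0r => /eqP.
rewrite mulf_eq0 => /orP [/eqP H|/eqP H].
  by left; apply: Hdiv.
by right; apply: Hdiv.
Qed.

Lemma unit_T (P : T) (c : K) : c != 0 -> size P = 1%N ->
  (exists d, lead_coef P * d = c%:P) -> P \is a GRing.unit.
Proof.
move=> c0 sP [d Hd].
have HP : P = (P`_0)%:P by apply: size1_polyC; rewrite sP.
rewrite HP lead_coefC in Hd; rewrite HP.
apply: (rmorph_unit polyC); apply/unitrPr; exists (d * (c^-1)%:P).
by rewrite mulrA Hd -polyCM mulfV.
Qed.

Lemma Psi_unit (P : T) : P \is a GRing.unit -> Psi P \is a GRing.unit.
Proof. exact: rmorph_unit. Qed.

Lemma lin2_irr (a b : K) : a != 0 -> mirreducible (lin2 a b).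
Proof.
move=> a0; split; [exact: lin2_neq0 | split; [exact: lin2_nunit|]].
move=> q r Hqr.
have sL := size_Phi_lin2 a b a0.
have lL : lead_coef (Phi (lin2 a b)) = a%:P.
  by rewrite Phi_lin2 // lead_coefM lead_coefC lead_coefXsubC mulr1.
rewrite Hqr PhiM in sL lL.
have q0 : Phi q != 0 by apply/eqP => e; move: sL; rewrite e mul0r size_poly0.
have r0 : Phi r != 0 by apply/eqP => e; move: sL; rewrite e mulr0 size_poly0.
rewrite size_mul // in sL.
rewrite lead_coefM in lL.
have := size_poly_gt0 (Phi q); have := size_poly_gt0 (Phi r).
rewrite q0 r0 => /= h1 h2.
have [sq|sq] : size (Phi q) = 1%N \/ size (Phi r) = 1%N.
  move: h1 h2 sL; set x := size (Phi q); set y := size (Phi r); clearbody x y; lia.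
  left; rewrite -(Psi_Phi q); apply: Psi_unit; apply: (unit_T _ _ a0 sq).
  by exists (lead_coef (Phi r)).
right; rewrite -(Psi_Phi r); apply: Psi_unit; apply: (unit_T _ _ a0 sq).
by exists (lead_coef (Phi q)); rewrite mulrC.
Qed.

Lemma unit_mpolyE {s : MP} : s \is a GRing.unit -> s = (s@_0)%:MP /\ s@_0 != 0.
Proof.
move=> Hs; have /andP [/eqP E U] : (s == (s@_0)%:MP) && (s@_0 \in GRing.unit) := Hs.
by split => //; rewrite -unitfE.
Qed.

Lemma mpolyC_inv (c : K) : c != 0 -> c%:MP * (c^-1)%:MP = 1 :> MP.
Proof. by move=> c0; rewrite -mpolyCM mulfV // mpolyC1. Qed.

Lemma dvd1_unit (L : MP) : mdvd L 1 -> L \is a GRing.unit.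
Proof. by move=> [r Hr]; apply/unitrPr; exists r. Qed.

Lemma prime_ndvd_const (L : MP) c : mprime L -> c != 0 -> ~ mdvd L c%:MP.
Proof.
move=> [_ nu _] c0 [r Hr]; move/negP: nu; apply; apply: dvd1_unit.
exists (r * (c^-1)%:MP); by rewrite mulrA -Hr mpolyC_inv.
Qed.

Lemma mprimeD (L : MP) : mprime L -> forall x y, mdvd L (x * y) -> mdvd L x \/ mdvd L y.
Proof. by case. Qed.
Lemma mprime0 (L : MP) : mprime L -> L != 0.
Proof. by case. Qed.
Arguments mprimeD [L]. Arguments mprime0 [L].

Lemma prime_dvd_exp (L F : MP) e : mprime L -> mdvd L (F ^+ e) -> mdvd L F.
Proof.
move=> PL; elim: e => [|e IH].
  by rewrite expr0 => /dvd1_unit; case: PL => _ /negP.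
rewrite exprS => /(mprimeD PL) [] //.
Qed.

Lemma prime_dvd_prod (I : eqType) (r : seq I) (P : pred I) (F : I -> MP) (L : MP) :
  mprime L -> mdvd L (\prod_(i <- r | P i) F i) ->
  exists2 i, i \in r & P i /\ mdvd L (F i).
Proof.
move=> PL; elim: r => [|x r IH].
  by rewrite big_nil => /dvd1_unit; case: PL => _ /negP.
rewrite big_cons; case: ifP => Px.
  move=> /(mprimeD PL) [H|H].
    by exists x; rewrite ?mem_head.
  by have [i ir Hi] := IH H; exists i; rewrite // in_cons ir orbT.
by move=> /IH [i ir Hi]; exists i; rewrite // in_cons ir orbT.
Qed.

Lemma irr_dvd_prime (p L : MP) : mirreducible p -> mprime L -> mdvd L p ->
  massociated p L.
Proof.
move=> [p0 [pu Hp]] [_ Lu _] [s Hs].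
have [Lu'|su] := Hp _ _ Hs; first by rewrite Lu' in Lu.
have [E s0] := unit_mpolyE su.
exists (s@_0); split => //.
by rewrite Hs {1}E mulrC mul_mpolyC.
Qed.

Lemma massoc_sym (p q : MP) : massociated p q -> massociated q p.
Proof.
move=> [c [c0 E]]; exists c^-1; split; first by rewrite invr_eq0.
by rewrite E scalerA mulVf // scale1r.
Qed.

Lemma massoc_trans (p q r : MP) : massociated p q -> massociated q r -> massociated p r.
Proof.
move=> [c [c0 E]] [d [d0 F]]; exists (c * d); split; first by rewrite mulf_neq0.
by rewrite E F scalerA.
Qed.

Arguments massoc_sym {p q}. Arguments massoc_trans {p q r}.

Lemma irr_dvd_primes (I : eqType) (r : seq I) (F : I -> MP) (e : I -> nat)
    (p : MP) (c : K) :
  mirreducible p -> (forall i, i \in r -> mprime (F i)) -> c != 0 ->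
  forall q, p * q = c%:MP * \prod_(i <- r) F i ^+ e i ->
  exists2 i, i \in r & mdvd (F i) p.
Proof.
move=> Ip; elim: r => [|x r IH] Pr c0 q.
  rewrite big_nil mulr1 => E.
  case: Ip => _ [/negP pu _]; exfalso; apply: pu; apply/unitrPr.
  by exists (q * (c^-1)%:MP); rewrite mulrA E mpolyC_inv.
have Px : mprime (F x) by apply: Pr; rewrite mem_head.
have Pr' : forall i, i \in r -> mprime (F i).
  by move=> i ir; apply: Pr; rewrite in_cons ir orbT.
rewrite big_cons.
elim: (e x) q => [|m IHm] q.
  rewrite expr0 mul1r => /(IH Pr' c0) [i ir Hi].
  by exists i; rewrite // in_cons ir orbT.
move=> E.
have : mdvd (F x) (p * q).
  by exists (c%:MP * (F x ^+ m * \prod_(j <- r) F j ^+ e j)); rewrite E exprS; ring.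
case/(mprimeD Px) => [H|[q' Hq']]; first by exists x; rewrite ?mem_head.
apply: (IHm q'); apply: (mulfI (mprime0 Px)).
move: E; rewrite Hq' exprS => E.
by rewrite mulrCA E; ring.
Qed.

Lemma mult_eq (L Q Q' : MP) a b : mprime L -> ~ mdvd L Q -> ~ mdvd L Q' ->
  L ^+ a * Q = L ^+ b * Q' -> a = b.
Proof.
move=> PL nQ nQ'.
have L0 := mprime0 PL.
wlog ab : a b Q Q' nQ nQ' / (a <= b)%N.
  move=> W E; have [ab|ba] := leqP a b; first exact: (W a b Q Q' nQ nQ' ab E).
  by apply/esym/(W b a Q' Q) => //; apply: ltnW.
move=> E.
have E' : Q = L ^+ (b - a) * Q'.
  apply: (mulfI (expf_neq0 a L0)); by rewrite E mulrA -exprD subnKC.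
case: (b - a)%N E' (subnKC ab) => [|d] E' H.
  by move: H; rewrite addn0.
by exfalso; apply: nQ; exists (L ^+ d * Q'); rewrite E' exprS mulrA.
Qed.

Lemma lin2_coef (a b : K) m :
  (lin2 a b)@_m = a * (mnm1 (0 : 'I_2) == m)%:R + b * (mnm1 (1 : 'I_2) == m)%:R + (m == 0%MM)%:R.
Proof. by rewrite /lin2 !mcoeffD !mcoeffZ !mcoeffX mcoeff1. Qed.

Lemma massoc_lin2 (a b a' b' : K) : massociated (lin2 a b) (lin2 a' b') -> a = a' /\ b = b'.
Proof.
move=> [c [c0 E]].
have E0 := congr1 (mcoeff 0%MM) E.
have E1 := congr1 (mcoeff (mnm1 (0 : 'I_2))) E.
have E2 := congr1 (mcoeff (mnm1 (1 : 'I_2))) E.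
rewrite /= mcoeffZ !lin2_coef !mnm1_eq0 !eqxx !mulr0 !add0r in E0.
rewrite /= mcoeffZ !lin2_coef !eq_mnm1 !eqxx mnm1_eq0 /= !mulr0 !mulr1 !addr0 in E1.
rewrite /= mcoeffZ !lin2_coef !eq_mnm1 !eqxx mnm1_eq0 /= !mulr0 !mulr1 !addr0 !add0r in E2.
rewrite mulr1 in E0.
by rewrite E1 E2 -E0 !mul1r.
Qed.

Lemma linform_pi (n : nat) (c : 'I_n -> K) (j z w : 'I_n) :
  val z = 0%N -> val w = n.-1 -> (0 < val j < n.-1)%N -> c w = 1 ->
  linform c \mPo pi_tuple K j = lin2 (c z) (c j).
Proof.
move=> z0 wn /andP [j0 jn] cw.
have jz : j != z by apply/eqP => e; move: j0; rewrite e z0.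
have wz : w != z by apply/eqP => e; move: wn; rewrite e z0; lia.
have wj : w != j by apply/eqP => e; move: wn; rewrite e; lia.
rewrite /linform raddf_sum.
have T m : (c m *: 'X_m) \mPo pi_tuple K j =
    c m *: (if val m == 0%N then 'X_(0 : 'I_2)
          else if m == j then 'X_(1 : 'I_2)
          else if val m == n.-1 then 1 else 0).
  by rewrite comp_mpolyZ comp_mpolyXU -tnth_nth tnth_mktuple.
rewrite (eq_bigr _ (fun m _ => T m)).
rewrite (bigD1 z) //= (bigD1 j) //= (bigD1 w) /=; last by rewrite wz wj.
rewrite big1 ?addr0; last first.
  move=> m /andP [/andP [mz mj] mw].
  have -> : (val m == 0%N) = false by apply/negbTE; rewrite -z0 val_eqE.
  have -> : (val m == n.-1) = false by apply/negbTE; rewrite -wn val_eqE.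
  by rewrite (negbTE mj) scaler0.
rewrite z0 eqxx wn eqxx (negbTE wj).
have -> : (val j == 0%N) = false by apply/negbTE; rewrite -lt0n.
have -> : (n.-1 == 0%N) = false by apply/negbTE; lia.
by rewrite eqxx cw scale1r /lin2 addrA.
Qed.

Lemma gproj_prodlin (n k : nat) (lam : K) (l : 'I_k -> 'I_n -> K) (alpha : 'I_k -> nat)
   (j z w : 'I_n) :
  val z = 0%N -> val w = n.-1 -> mid_index j -> (forall i, l i w = 1) ->
  gproj (prodlin lam l alpha) j = lam *: \prod_(i < k) lin2 (l i z) (l i j) ^+ alpha i.
Proof.
move=> z0 wn mj lw.
rewrite /gproj /prodlin comp_mpolyZ rmorph_prod; congr (_ *: _).
apply: eq_bigr => i _; rewrite rmorphXn; congr (_ ^+ _).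
exact: (@linform_pi n (l i) j z w z0 wn mj (lw i)).
Qed.

Lemma fac_dvd (g : MP) mu (s : seq (MP * nat)) pe :
  irr_factorization g mu s -> pe \in s -> exists q, pe.1 * q = g.
Proof.
move=> [Eg Hirr _] ps.
have [_ e0] := Hirr pe ps.
exists (mu%:MP * (pe.1 ^+ pe.2.-1 * \prod_(y <- rem pe s) y.1 ^+ y.2)).
rewrite Eg (big_rem pe ps) /= -mul_mpolyC.
rewrite -{2}(prednK e0) exprS; ring.
Qed.

Lemma nth_map_enum (k : nat) (X : Type) (F : 'I_k -> X) (x0 : X) t (Ht : (t < k)%N) :
  nth x0 [seq F i | i <- enum 'I_k] t = F (Ordinal Ht).
Proof.
rewrite (nth_map (Ordinal Ht)) ?size_enum_ord //; congr F; apply: val_inj.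
by rewrite /= nth_enum_ord.
Qed.

Section Abstract.
Variables (k : nat) (lam : K) (L : 'I_k -> MP) (alpha : 'I_k -> nat) (g : MP).
Hypothesis lam0 : lam != 0.
Hypothesis alpha0 : forall i, (0 < alpha i)%N.
Hypothesis Lprime : forall i, mprime (L i).
Hypothesis Lirr : forall i, mirreducible (L i).
Hypothesis Linj : forall i i', massociated (L i) (L i') -> i = i'.
Hypothesis Eg : g = lam *: \prod_(i < k) L i ^+ alpha i.

Lemma g_neq0 : g != 0.
Proof.
rewrite Eg scaler_eq0 (negbTE lam0) /=; rewrite prodf_seq_neq0.
by apply/allP => i _; apply/implyP => _; apply: expf_neq0; apply: mprime0.
Qed.

Lemma abs_F4 p q : mirreducible p -> p * q = g -> exists i, massociated p (L i).
Proof.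
move=> Ip E.
have E' : p * q = lam%:MP * \prod_(i <- enum 'I_k) L i ^+ alpha i.
  by rewrite E Eg big_enum /= mul_mpolyC.
have [i _ Hi] := @irr_dvd_primes _ _ _ _ _ _ Ip (fun i _ => Lprime i) lam0 _ E'.
by exists i; apply: irr_dvd_prime.
Qed.

Lemma L_dvd_g i : mdvd (L i) g.
Proof.
exists (lam%:MP * (L i ^+ (alpha i).-1 * \prod_(y | y != i) L y ^+ alpha y)).
rewrite Eg (bigD1 i) //= -mul_mpolyC -{1}(prednK (alpha0 i)) exprS; ring.
Qed.

Lemma abs_F5 mu s : irr_factorization g mu s ->
  forall i, exists2 pe, pe \in s & massociated pe.1 (L i).
Proof.
move=> F i; have [Eg' Hirr _] := F.
have mu0 : mu != 0.
  by apply/eqP => m0; move: g_neq0; rewrite Eg' m0 scale0r eqxx.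
have := L_dvd_g i; rewrite Eg' -mul_mpolyC => /(mprimeD (Lprime i)) [H|H].
  by exfalso; exact: (@prime_ndvd_const _ _ (Lprime i) mu0 H).
have [pe ps [_ Hpe]] := @prime_dvd_prod _ _ _ _ _ (Lprime i) H.
exists pe => //; apply: irr_dvd_prime; first by case: (Hirr pe ps).
  exact: Lprime.
exact: (@prime_dvd_exp _ _ _ (Lprime i) Hpe).
Qed.

Lemma abs_part1 mu s : irr_factorization g mu s ->
  size s = k /\ forall pe, pe \in s -> exists i, massociated pe.1 (L i).
Proof.
move=> F; have [Eg' Hirr Hdist] := F.
have shape : forall pe, pe \in s -> exists i, massociated pe.1 (L i).
  move=> pe ps; have [q Hq] := @fac_dvd _ _ _ _ F ps.
  by apply: (abs_F4 _ q) => //; case: (Hirr pe ps).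
split => //.
have H1 : forall t : 'I_(size s), exists i,
    massociated (nth (0, 0%N) s t).1 (L i).
  move=> t; apply: shape; exact: mem_nth.
have [phi Hphi] := fin_all_exists H1.
have H2 : forall i : 'I_k, exists t : 'I_(size s),
    massociated (nth (0, 0%N) s t).1 (L i).
  move=> i; have [pe ps Hpe] := abs_F5 _ _ F i.
  have hi : (index pe s < size s)%N by rewrite index_mem.
  exists (Ordinal hi) => /=.
  by rewrite nth_index.
have [psi Hpsi] := fin_all_exists H2.
apply/eqP; rewrite eqn_leq; apply/andP; split.
  have : injective phi.
    move=> t1 t2 e; apply: val_inj; apply/eqP/negPn/negP => ne.
    apply: (Hdist t1 t2 (ltn_ord t1) (ltn_ord t2)); first by apply/eqP.
    apply: (massoc_trans (Hphi t1)); rewrite e; apply: massoc_sym; exact: Hphi.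
  by move/leq_card; rewrite !card_ord.
have : injective psi.
  move=> i1 i2 e; apply: Linj.
  apply: (massoc_trans (massoc_sym (Hpsi i1))); rewrite e; exact: Hpsi.
by move/leq_card; rewrite !card_ord.
Qed.

Lemma nodvd x (P : pred 'I_k) (h : 'I_k -> 'I_k) (e : 'I_k -> nat) :
  (forall y, P y -> h y != x) ->
  ~ mdvd (L x) (lam%:MP * \prod_(y | P y) L (h y) ^+ e y).
Proof.
move=> Hh /(mprimeD (Lprime x)) [H|H].
  exact: (@prime_ndvd_const _ _ (Lprime x) lam0 H).
have [y _ [Py Hy]] := @prime_dvd_prod _ _ _ _ _ (Lprime x) H.
have := @prime_dvd_exp _ _ _ (Lprime x) Hy => /(@irr_dvd_prime _ _ (Lirr (h y)) (Lprime x)).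
by move/Linj => E; move: (Hh y Py); rewrite E eqxx.
Qed.

Lemma abs_part3 (M : 'I_k -> MP) (beta : 'I_k -> nat) (t : 'I_k -> 'I_k) :
  irr_factorization g lam [seq (M i, beta i) | i <- enum 'I_k] ->
  (forall i, M i = L (t i)) ->
  injective t /\ forall i, beta i = alpha (t i).
Proof.
move=> [Eg' _ Hdist] Ht.
have tinj : injective t.
  move=> i1 i2 e; apply: val_inj; apply/eqP/negPn/negP => ne.
  have s1 : (i1 < size [seq (M i, beta i) | i <- enum 'I_k])%N by rewrite size_map size_enum_ord.
  have s2 : (i2 < size [seq (M i, beta i) | i <- enum 'I_k])%N by rewrite size_map size_enum_ord.
  apply: (Hdist i1 i2 s1 s2); first by apply/eqP.
  rewrite (@nth_map_enum _ _ (fun i => (M i, beta i)) _ _ (ltn_ord i1)).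
  rewrite (@nth_map_enum _ _ (fun i => (M i, beta i)) _ _ (ltn_ord i2)) /=.
  have -> : Ordinal (ltn_ord i1) = i1 by apply: val_inj.
  have -> : Ordinal (ltn_ord i2) = i2 by apply: val_inj.
  by rewrite !Ht e; exists 1; rewrite oner_eq0 scale1r.
split => // i.
have E : lam *: \prod_(i0 < k) L (t i0) ^+ beta i0 = lam *: \prod_(i0 < k) L i0 ^+ alpha i0.
  rewrite -Eg Eg' big_map big_enum /=; congr (_ *: _); apply: eq_bigr => y _.
  by rewrite Ht.
rewrite [X in lam *: X = _](bigD1 i) // [X in _ = lam *: X](bigD1 (t i)) // -!mul_mpolyC in E.
apply: (@mult_eq (L (t i)) (lam%:MP * \prod_(y | y != i) L (t y) ^+ beta y)
   (lam%:MP * \prod_(y | y != t i) L (id y) ^+ alpha y)).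
- exact: Lprime.
- apply: nodvd => y yi; apply: contra yi => /eqP e; apply/eqP; exact: tinj.
- by apply: nodvd.
- by rewrite mulrCA E mulrCA.
Qed.
End Abstract.
End Iso.

Theorem proposition7 (K : fieldType) (n k : nat) (lam : K)
    (l : 'I_k -> 'I_n -> K) (alpha : 'I_k -> nat) :
  infinite_field K ->
  (4 <= n)%N ->
  lam != 0 ->
  (forall i, (0 < alpha i)%N) ->
  (forall i i', i != i' -> ~ proportional (l i) (l i')) ->
  (* hypothesis ( * ) *)
  (forall i (m : 'I_n), val m = 0%N -> l i m != 0) ->
  (forall i i' (m : 'I_n), val m = 0%N -> i != i' -> l i m != l i' m) ->
  (forall i (m : 'I_n), val m = n.-1 -> l i m = 1) ->
  let f := prodlin lam l alpha in
  (* Step 2: every irreducible factorization of g_j has the displayed shape *)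
  (forall j : 'I_n, mid_index j ->
     forall (mu : K) (s : seq ({mpoly K[2]} * nat)),
       irr_factorization (gproj f j) mu s ->
       size s = k /\
       forall pe, pe \in s -> exists a b : K, massociated pe.1 (lin2 a b)) /\
  (* ... and a factorization of the displayed shape exists *)
  (exists (a b : 'I_n -> 'I_k -> K) (beta : 'I_n -> 'I_k -> nat),
     forall j : 'I_n, mid_index j ->
       irr_factorization (gproj f j) lam
         [seq (lin2 (a j i) (b j i), beta j i) | i <- enum 'I_k]) /\
  (* Steps 3 and 4: for any outputs of step 2 of that shape ... *)
  (forall (a b : 'I_n -> 'I_k -> K) (beta : 'I_n -> 'I_k -> nat),
     (forall j : 'I_n, mid_index j ->
        irr_factorization (gproj f j) lam
          [seq (lin2 (a j i) (b j i), beta j i) | i <- enum 'I_k]) ->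
     (* the reordering of step 3 is possible ... *)
     (exists sigma : 'I_n -> {perm 'I_k},
        forall (j j' : 'I_n) (i : 'I_k), mid_index j -> mid_index j' ->
          a j (sigma j i) = a j' (sigma j' i)) /\
     (* ... and for any such reordering, exponents agree and the output of
        step 4 equals f, and is the given factorization up to permutation *)
     (forall sigma : 'I_n -> {perm 'I_k},
        (forall (j j' : 'I_n) (i : 'I_k), mid_index j -> mid_index j' ->
           a j (sigma j i) = a j' (sigma j' i)) ->
        forall j0 : 'I_n, mid_index j0 ->
        let A := fun i => a j0 (sigma j0 i) in
        let c := fun i (m : 'I_n) => b m (sigma m i) in
        let gam := fun i => beta j0 (sigma j0 i) in
        (forall (j : 'I_n) (i : 'I_k), mid_index j -> beta j (sigma j i) = gam i) /\
        prodlin lam (fun i => outlin (A i) (c i)) gam = f /\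
        exists tau : {perm 'I_k}, forall i,
          (forall m, outlin (A i) (c i) m = l (tau i) m) /\ gam i = alpha (tau i))).
Proof.
move=> Kinf n4 lam0 alpha0 nprop l0 ldist lw f.
have n0 : (0 < n)%N by lia.
have nn : (n.-1 < n)%N by lia.
pose z := Ordinal n0; pose w := Ordinal nn.
have z0 : val z = 0%N by [].
have wn : val w = n.-1 by [].
have lz : forall i, l i z != 0 := fun i => l0 i z z0.
have lzinj : forall i i', l i z = l i' z -> i = i'.
  move=> i i' e; apply/eqP/negPn/negP => ne; move: (ldist i i' z z0 ne).
  by rewrite e eqxx.
have lw1 : forall i, l i w = 1 := fun i => lw i w wn.
pose L (j : 'I_n) (i : 'I_k) := lin2 (l i z) (l i j).
have Lprime : forall j i, mprime K (L j i) := fun j i => @lin2_prime K (l i z) (l i j) (lz i).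
have Lirr : forall j i, mirreducible (L j i) := fun j i => @lin2_irr K (l i z) (l i j) (lz i).
have Linj : forall j i i', massociated (L j i) (L j i') -> i = i'.
  by move=> j i i' /massoc_lin2 [e _]; apply: lzinj.
have Eg : forall j, mid_index j -> gproj f j = lam *: \prod_(i < k) L j i ^+ alpha i.
  by move=> j mj; exact: (@gproj_prodlin K n k lam l alpha j z w z0 wn mj lw1).
split.
  move=> j mj mu s F.
  have [sz sh] := @abs_part1 K k lam (L j) alpha (gproj f j) lam0 alpha0 (Lprime j) (Linj j) (Eg j mj) mu s F.
  split => // pe ps; have [i Hi] := sh pe ps.
  by exists (l i z), (l i j).
split.
  exists (fun j i => l i z), (fun j i => l i j), (fun j i => alpha i).
  move=> j mj; split.
  - by rewrite Eg // big_map big_enum.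
  - by move=> pe /mapP [i _ ->] /=; split; [exact: Lirr | exact: alpha0].
  - move=> i1 i2 s1 s2 ne.
    have s1' : (i1 < k)%N by rewrite size_map size_enum_ord in s1.
    have s2' : (i2 < k)%N by rewrite size_map size_enum_ord in s2.
    rewrite (@nth_map_enum k _ (fun i => (lin2 (l i z) (l i j), alpha i)) _ _ s1').
    rewrite (@nth_map_enum k _ (fun i => (lin2 (l i z) (l i j), alpha i)) _ _ s2') /=.
    move=> /massoc_lin2 [e _]; apply: ne.
    by have := lzinj _ _ e => /(congr1 val).
move=> a b beta Hfac.
have HT : forall j : 'I_n, exists t : {perm 'I_k}, mid_index j ->
    forall i, [/\ a j i = l (t i) z, b j i = l (t i) j & beta j i = alpha (t i)].
  move=> j; case mj: (mid_index j); last by exists 1%g.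
  have Hex : forall i, exists t, a j i = l t z /\ b j i = l t j.
    move=> i.
    have ps : (lin2 (a j i) (b j i), beta j i) \in
        [seq (lin2 (a j i0) (b j i0), beta j i0) | i0 <- enum 'I_k].
      by apply/mapP; exists i; rewrite ?mem_enum.
    have [q Hq] := @fac_dvd K _ _ _ _ (Hfac j mj) ps.
    have Ip : mirreducible (lin2 (a j i) (b j i)).
      by case: (Hfac j mj) => _ H _; case: (H _ ps).
    have [t Ht] := @abs_F4 K k lam (L j) alpha (gproj f j) lam0 (Lprime j) (Eg j mj) _ q Ip Hq.
    by exists t; apply: massoc_lin2.
  have [t Ht] := fin_all_exists Hex.
  have HM : forall i, lin2 (a j i) (b j i) = L j (t i).
    by move=> i; case: (Ht i) => -> ->.
  have [tinj Hbeta] := @abs_part3 K k lam (L j) alpha (gproj f j) lam0 (Lprime j) (Lirr j)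
     (Linj j) (Eg j mj) (fun i => lin2 (a j i) (b j i)) (beta j) t (Hfac j mj) HM.
  exists (perm tinj) => _ i; rewrite permE; have [e1 e2] := Ht i.
  by split; [exact: e1 | exact: e2 | exact: Hbeta].
have [T HTT] := fin_all_exists HT.
split.
  exists (fun j => (T j)^-1)%g => j j' i mj mj'.
  have [e1 _ _] := HTT j mj ((T j)^-1 i)%g.
  have [e1' _ _] := HTT j' mj' ((T j')^-1 i)%g.
  by rewrite e1 e1' !permKV.
move=> sigma Hs j0 mj0 A c gam.
pose tau := (sigma j0 * T j0)%g.
have Ht : forall j i, mid_index j -> T j (sigma j i) = tau i.
  move=> j i mj; apply: lzinj; rewrite permM.
  have [e1 _ _] := HTT j mj (sigma j i); have [e2 _ _] := HTT j0 mj0 (sigma j0 i).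
  by rewrite -e1 -e2; apply: Hs.
have Hgam : forall i, gam i = alpha (tau i).
  move=> i; rewrite /gam; have [_ _ e] := HTT j0 mj0 (sigma j0 i).
  by rewrite e Ht.
have Hout : forall i m, outlin (A i) (c i) m = l (tau i) m.
  move=> i m; rewrite /outlin; case: ifP => [/eqP m0|m0].
    have -> : m = z by apply: val_inj.
    rewrite /A; have [e _ _] := HTT j0 mj0 (sigma j0 i).
    by rewrite e Ht.
  case: ifP => [/eqP mn|mn]; first by rewrite lw.
  have mm : mid_index m.
    have xn : (val m < n)%N := ltn_ord m.
    rewrite /mid_index; move: m0 mn xn; set x := val m; clearbody x.
    move=> /negbT m0 /negbT mn xn; lia.
  rewrite /c; have [_ e _] := HTT m mm (sigma m i).
  by rewrite e Ht.
split; [|split].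
- move=> j i mj; have [_ _ e] := HTT j mj (sigma j i).
  by rewrite e Ht // Hgam.
- rewrite /f /prodlin; congr (_ *: _).
  rewrite [RHS](reindex_inj (@perm_inj _ tau)) /=.
  apply: eq_bigr => i _; rewrite Hgam; congr (_ ^+ _).
  by rewrite /linform; apply: eq_bigr => m _; rewrite Hout.
- by exists tau => i; split; [exact: Hout | exact: Hgam].
Qed.
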